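(* Let $f_i:\mathbb{R}^d\to\mathbb{R}$ be twice differentiable, fix $w^t\in\mathbb{R}^d$, and let $g_t=\nabla f_i(w^t)$, $\mathbf{H}_t=\nabla^2 f_i(w^t)$ and $$q(w)=f_i(w^t)+\langle g_t,w-w^t\rangle+\tfrac12\langle \mathbf{H}_t(w-w^t),w-w^t\rangle .$$ Define $$w^{t+1/2}=\arg\min_{w\in\mathbb{R}^d}\tfrac12\|w-w^t\|^2\ \text{ s.t. }\ f_i(w^t)+\langle g_t,w-w^t\rangle=0,$$ $$w^{t+1}=\arg\min_{w\in\mathbb{R}^d}\tfrac12\|w-w^{t+1/2}\|^2\ \text{ s.t. }\ q(w^{t+1/2})+\langle \nabla q(w^{t+1/2}),w-w^{t+1/2}\rangle=0,$$ assuming $g_t\neq 0$ and $\nabla q(w^{t+1/2})\neq 0$. Then $$w^{t+1}=w^t-\frac{f_i(w^t)}{\|g_t\|^2}g_t-\frac12\,\frac{f_i(w^t)^2}{\|g_t\|^4}\,\frac{\langle \mathbf{H}_tg_t,g_t\rangle}{\|v^{t+1}\|^2}\,v^{t+1},\qquad\text{where } v^{t+1}=\left(\mathbf{I}-\mathbf{H}_t\frac{f_i(w^t)}{\|g_t\|^2}\right)g_t .$$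
   Context: This two-step update is called SP2$^+$. Note that $\nabla q(w^{t+1/2})=v^{t+1}$. *)

(* Defs.v *)
From HB Require Import structures.
From mathcomp Require Import all_boot all_order all_algebra.
From mathcomp Require Import all_classical all_reals all_analysis.
Set Implicit Arguments. Unset Strict Implicit. Unset Printing Implicit Defensive.
Import Order.TTheory GRing.Theory Num.Theory.
Import numFieldNormedType.Exports.
Local Open Scope ring_scope.

Definition dot (R : realType) (d : nat) (u v : 'cV[R]_d) : R := (u^T *m v) 0 0.

(* Squared Euclidean norm ||v||^2 (NOT the library's max-norm `|v|). *)
Definition sqnorm (R : realType) (d : nat) (v : 'cV[R]_d) : R := dot v v.

Definition is_gradient (R : realType) (d : nat) (f : 'cV[R]_d -> R^o)
  (x gr : 'cV[R]_d) : Prop :=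
  differentiable f x /\ forall h, 'd f x h = dot gr h.

Definition qmodel (R : realType) (d : nat) (fwt : R) (g : 'cV[R]_d)
  (H : 'M[R]_d) (wt : 'cV[R]_d) (w : 'cV[R]_d) : R :=
  fwt + dot g (w - wt) + 2^-1 * dot (H *m (w - wt)) (w - wt).

(* Main.v *)
Require Import Defs.
From HB Require Import structures.
From mathcomp Require Import all_boot all_order all_algebra.
From mathcomp Require Import all_classical all_reals all_analysis.
From mathcomp Require Import ring lra.
Import Order.TTheory GRing.Theory Num.Theory.
Import numFieldNormedType.Exports.
Local Open Scope ring_scope.

Section S.
Context {R : realType} {d : nat}.
Implicit Types u v w : 'cV[R]_d.

Lemma dotE u v : dot u v = \sum_i u i 0 * v i 0.
Proof. by rewrite /dot mxE; apply: eq_bigr => i _; rewrite mxE. Qed.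

Lemma dotC u v : dot u v = dot v u.
Proof. by rewrite !dotE; apply: eq_bigr => i _; rewrite mulrC. Qed.

Lemma dotDr u v w : dot u (v + w) = dot u v + dot u w.
Proof. by rewrite !dotE -big_split; apply: eq_bigr => i _; rewrite mxE mulrDr. Qed.

Lemma dotDl u v w : dot (v + w) u = dot v u + dot w u.
Proof. by rewrite dotC dotDr !(dotC u). Qed.

Lemma dotZr a u v : dot u (a *: v) = a * dot u v.
Proof. by rewrite !dotE mulr_sumr; apply: eq_bigr => i _; rewrite mxE mulrCA. Qed.

Lemma dotZl a u v : dot (a *: u) v = a * dot u v.
Proof. by rewrite dotC dotZr dotC. Qed.

Lemma dotNr u v : dot u (- v) = - dot u v.
Proof. by rewrite -scaleN1r dotZr mulN1r. Qed.

Lemma dotNl u v : dot (- u) v = - dot u v.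
Proof. by rewrite dotC dotNr dotC. Qed.

Lemma dotBr u v w : dot u (v - w) = dot u v - dot u w.
Proof. by rewrite dotDr dotNr. Qed.

Lemma dotBl u v w : dot (v - w) u = dot v u - dot w u.
Proof. by rewrite dotDl dotNl. Qed.

Lemma dotMl (H : 'M[R]_d) u v : dot (H *m u) v = dot u (H^T *m v).
Proof. by rewrite /dot trmx_mul mulmxA. Qed.

Lemma sqnorm_eq0 u : sqnorm u = 0 -> u = 0.
Proof.
rewrite /sqnorm dotE => /eqP; rewrite psumr_eq0; last by move=> i _; by rewrite -expr2 sqr_ge0.
move=> /allP H; apply/matrixP => i j; rewrite ord1 mxE; have := H i (mem_index_enum i); by rewrite mulf_eq0 orbb => /eqP.
Qed.
Lemma sqnorm_ge0 u : 0 <= sqnorm u.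
Proof. by rewrite /sqnorm dotE; apply: sumr_ge0 => i _; rewrite -expr2 sqr_ge0. Qed.

Lemma sqnormD u v : sqnorm (u + v) = sqnorm u + 2 * dot u v + sqnorm v.
Proof. rewrite /sqnorm !dotDl !dotDr (dotC v u); ring. Qed.

Lemma proj (a : R) n p x : n != 0 -> a + dot n (x - p) = 0 ->
  (forall w, a + dot n (w - p) = 0 ->
     2^-1 * sqnorm (x - p) <= 2^-1 * sqnorm (w - p)) ->
  x = p - (a / sqnorm n) *: n.
Proof.
move=> n0 hx hmin.
have sn0 : sqnorm n != 0 by apply/eqP => /sqnorm_eq0; apply/eqP.
set s := p - (a / sqnorm n) *: n.
have sp : s - p = - ((a / sqnorm n) *: n) by rewrite /s addrAC subrr add0r.
have orth : forall w, a + dot n (w - p) = 0 -> dot (w - s) (s - p) = 0.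
  move=> w hw; rewrite sp dotNr dotZr.
  have -> : w - s = (w - p) + (a / sqnorm n) *: n by rewrite /s opprB addrA addrAC -addrA [- p + _]addrC addrA.
  rewrite dotDl dotZl (dotC (w - p)) -/(sqnorm n).
  have -> : dot n (w - p) = - a by rewrite -(subr0 (dot n _)) -hw; ring.
  rewrite mulfVK //; ring.
have hs : a + dot n (s - p) = 0 by rewrite sp dotNr dotZr -/(sqnorm n) mulfVK // subrr.
have := hmin s hs.
have -> : x - p = (x - s) + (s - p) by rewrite addrA subrK.
rewrite [sqnorm (x - s + _)]sqnormD (orth x hx) mulr0 addr0 ler_pM2l ?invr_gt0 ?ltr0n // gerDr => hle.
have : sqnorm (x - s) = 0 by apply/eqP; rewrite eq_le hle sqnorm_ge0.
by move/sqnorm_eq0/eqP; rewrite subr_eq0 => /eqP.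
Qed.

Lemma q_expand fwt g (H : 'M[R]_d) wt x v (h : R) : H^T = H ->
  qmodel fwt g H wt (h *: v + x) - qmodel fwt g H wt x =
  h * dot (g + H *m (x - wt)) v + h ^+ 2 * (2^-1 * dot (H *m v) v).
Proof.
move=> HT; rewrite /qmodel.
have -> : h *: v + x - wt = h *: v + (x - wt) by rewrite addrA.
set u := x - wt; clearbody u.
rewrite mulmxDr -scalemxAr !dotDl !dotDr !dotZl !dotZr.
have -> : dot (H *m v) u = dot (H *m u) v by rewrite dotMl HT dotC.
by field.
Qed.

Lemma grad_q fwt g (H : 'M[R]_d) wt x gq : H^T = H ->
  is_gradient (qmodel fwt g H wt) x gq -> gq = g + H *m (x - wt).
Proof.
move=> HT [dq hd].
set A := g + H *m (x - wt).
have key : forall v, dot gq v = dot A v.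
  move=> v; rewrite -hd -deriveE //.
  apply: cvg_lim => //.
  set B := 2^-1 * dot (H *m v) v.
  have E : {near dnbhs (0:R), (fun h : R => dot A v + h * B) =1 (fun h : R => h^-1 *: ((qmodel fwt g H wt \o shift x) (h *: v) -
    qmodel fwt g H wt x) : R^o)}.
    near=> h.
    have hn0 : h != 0 by near: h; exact: nbhs_dnbhs_neq.
    rewrite /= q_expand //=.
    rewrite -/A -/B; change (dot A v + h * B = h^-1 * (h * dot A v + h ^+ 2 * B)); by field.
  apply: cvg_trans (near_eq_cvg E) _.
  apply: cvg_within_filter.
  have L : ((fun h : R => dot A v + h * B) @ (0:R) --> dot A v + 0 * B)%classic.
    apply: cvgD; first exact: cvg_cst.
    exact: cvgMr_tmp cvg_id.
  by rewrite mul0r addr0 in L.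
have : sqnorm (gq - A) = 0 by rewrite /sqnorm dotBl !key subrr.
by move/sqnorm_eq0/eqP; rewrite subr_eq0 => /eqP.
Unshelve. all: by end_near.
Qed.
End S.

Theorem lemma3 (R : realType) (d : nat) (fwt : R) (g : 'cV[R]_d)
  (H : 'M[R]_d) (wt wh w1 gq : 'cV[R]_d) :
  H^T = H ->
  g != 0 ->
  fwt + dot g (wh - wt) = 0 ->
  (forall w : 'cV[R]_d, fwt + dot g (w - wt) = 0 ->
     2^-1 * sqnorm (wh - wt) <= 2^-1 * sqnorm (w - wt)) ->
  is_gradient (qmodel fwt g H wt) wh gq ->
  gq != 0 ->
  qmodel fwt g H wt wh + dot gq (w1 - wh) = 0 ->
  (forall w : 'cV[R]_d, qmodel fwt g H wt wh + dot gq (w - wh) = 0 ->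
     2^-1 * sqnorm (w1 - wh) <= 2^-1 * sqnorm (w - wh)) ->
  let v := (1%:M - (fwt / sqnorm g) *: H) *m g in
  w1 = wt - (fwt / sqnorm g) *: g
          - (2^-1 * (fwt ^+ 2 / sqnorm g ^+ 2)
               * (dot (H *m g) g / sqnorm v)) *: v.
Proof.
move=> HT g0 hwh hmin hgq gq0 hw1 hmin1 v.
have sg0 : sqnorm g != 0 by apply/eqP => /sqnorm_eq0; apply/eqP.
set c := fwt / sqnorm g.
have Ewh : wh = wt - c *: g by apply: (proj _ _ _ _ g0 hwh hmin).
have Egq : gq = g + H *m (wh - wt) by apply: (grad_q _ _ _ _ _ _ HT hgq).
have Edw : wh - wt = - (c *: g) by rewrite Ewh addrAC subrr add0r.
have Egv : gq = v.
  by rewrite Egq Edw /v mulmxBl mul1mx mulmxN -scalemxAr -scalemxAl.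
have Ew1 := proj _ _ _ _ gq0 hw1 hmin1.
rewrite Ew1 -Ewh Egv; congr (_ - _ *: _).
rewrite /qmodel Edw mulmxN -scalemxAr !(dotNr, dotNl, dotZl, dotZr) -/(sqnorm g) /c.
by field; rewrite sg0 andbT; apply/eqP => /sqnorm_eq0 /eqP; rewrite -Egv (negbTE gq0).
Qed.
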